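(* Let $u$ be a nonzero Laurent polynomial with symmetry type $\mathrm{S}u(z)=\epsilon z^c$, $\epsilon\in\{\pm1\}$, $c\in\mathbb Z$. Then $\epsilon=(-1)^{Z(u,1)}$ and $\mathrm{odd}(c)=\mathrm{odd}(Z(u,1)+Z(u,-1))$.
   Context: Laurent polynomial: $u(z)=\sum_k u(k)z^k$ with finitely many nonzero complex coefficients. $u$ has symmetry type $\epsilon z^c$ if $u(z)=\epsilon z^cu(z^{-1})$, and then $\mathrm{S}u(z):=u(z)/u(z^{-1})=\epsilon z^c$. $Z(u,z_0)$ is the multiplicity of $z_0\neq0$ as a zero of $u$. $\mathrm{odd}(k):=(1-(-1)^k)/2$. *)

(* Defs.v *)
From HB Require Import structures.
From mathcomp Require Import all_boot all_order all_algebra.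
From mathcomp Require Import complex.
From mathcomp Require Import reals.
Set Implicit Arguments. Unset Strict Implicit. Unset Printing Implicit Defensive.
Import Order.TTheory GRing.Theory Num.Theory.
Local Open Scope ring_scope.

(* Laurent polynomial with complex coefficients: coefficient function on int
   vanishing outside [-lbound, lbound]. *)
Record lpoly (C : nzRingType) := LPoly {
  lcoef :> int -> C;
  lbound : nat;
  lboundP : forall k : int, (lbound < `|k|)%N -> lcoef k = 0 }.

Section Laurent.
Variable C : fieldType.
Implicit Types (u : lpoly C) (z : C).

(* u(z) = \sum_k u(k) z^k *)
Definition leval u z : C :=
  \sum_(i < (lbound u).*2.+1) u (i%:Z - (lbound u)%:Z) * z ^ (i%:Z - (lbound u)%:Z).

(* the polynomial z^N u(z) *)
Definition lshiftpoly u : {poly C} :=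
  \poly_(i < (lbound u).*2.+1) u (i%:Z - (lbound u)%:Z).

(* Z(u, z0): multiplicity of z0 as a zero of u (meaningful for z0 != 0) *)
Definition lmult u z0 : nat := mup z0 (lshiftpoly u).

Definition lpoly_nonzero u : Prop := exists k, u k != 0.

Definition has_symtype u (eps : C) (c : int) : Prop :=
  forall z, z != 0 -> leval u z = eps * z ^ c * leval u z^-1.
End Laurent.

Definition oddZ (k : int) : nat := odd `|k|%N.

(* Main.v *)
Require Import Defs.
From HB Require Import structures.
From mathcomp Require Import all_boot all_order all_algebra.
From mathcomp Require Import complex.
From mathcomp Require Import reals.
From mathcomp Require Import zify ring.
Import Order.TTheory GRing.Theory Num.Theory.
Local Open Scope ring_scope.
Local Open Scope complex_scope.

Set Implicit Arguments. Unset Strict Implicit. Unset Printing Implicit Defensive.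
Section H.
Variable F : numFieldType.

Lemma poly_inf_roots (Q : {poly F}) :
  (forall n : nat, Q.[n.+2%:R] = 0) -> Q = 0.
Proof.
move=> H; apply/eqP; apply/negPn/negP => Q0.
have Hall : all (root Q) [seq (i.+2)%:R | i <- iota 0 (size Q)].
  by apply/allP => x /mapP [i _ ->]; apply/rootP.
have Hu : uniq [seq (i.+2)%:R : F | i <- iota 0 (size Q)].
  rewrite map_inj_uniq ?iota_uniq //.
  by move=> i j /eqP; rewrite eqr_nat => /eqP [].
have := max_poly_roots Q0 Hall; rewrite Hu size_map size_iota ltnn.
by move=> /(_ isT).
Qed.

Lemma factor_mup (q : {poly F}) x : q != 0 ->
  exists q1, q = q1 * ('X - x%:P) ^+ mup x q /\ ~~ root q1 x.
Proof.
move=> q0; have := leqnn (mup x q); rewrite mup_geq // => /dvdpP [q1 Hq].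
exists q1; split => //; apply/negP => /factor_theorem [q2 Hq2].
have := leqnn (mup x q); rewrite mup_leq //; move=> /negP; apply.
suff: ('X - x%:P) ^+ (mup x q).+1 %| q1 * ('X - x%:P) ^+ mup x q by rewrite -Hq.
by rewrite Hq2 -mulrA -exprS dvdp_mull.
Qed.

Lemma neg1_neq1 : (-1 : F) != 1.
Proof. by rewrite lt_eqF // (lt_trans (ltrN10 F) ltr01). Qed.

Lemma inner (r : {poly F}) (f : F) (k : int) :
  r.[1] != 0 -> r.[-1] != 0 ->
  (forall z, z != 0 -> z != 1 -> z != -1 -> r.[z] = f * z ^ k * r.[z^-1]) ->
  f = 1 /\ (-1) ^ k = 1 :> F.
Proof.
move=> r1 rm1 H.
have r0 : r != 0 by apply: contraNneq r1 => ->; rewrite horner0.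
set d := (size r).-1.
have sr : size r = d.+1 by rewrite /d prednK // size_poly_gt0.
set rr := \poly_(i < size r) r`_(d - i).
have rrE z : z != 0 -> rr.[z] = z ^+ d * r.[z^-1].
  move=> z0; rewrite horner_poly horner_coef sr mulr_sumr.
  rewrite (reindex_inj rev_ord_inj) /=; apply: eq_bigr => i _.
  have hi : (i <= d)%N by rewrite -ltnS.
  rewrite subSS subKn //.
  rewrite exprVn mulrCA; congr (_ * _).
  by rewrite -[X in _ = z ^+ X * _](subnK hi) exprD mulfK // expf_neq0.
have [K [j Hkj]] : exists K j : nat, K%:Z + k = j%:Z + d%:Z.
  by exists (absz k + d)%N, (absz ((absz k)%:Z + k)); lia.
set Q := 'X^K * r - f *: ('X^j * rr).
have QE z : Q.[z] = z ^+ K * r.[z] - f * (z ^+ j * rr.[z]).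
  by rewrite /Q hornerD hornerN hornerZ !hornerM !hornerXn.
have Q0 : Q = 0.
  apply: poly_inf_roots => n; set z : F := n.+2%:R.
  have z0 : z != 0 by rewrite pnatr_eq0.
  have z1 : z != 1 by rewrite /z -[1]/(1%:R : F) eqr_nat.
  have zm1 : z != -1 by rewrite gt_eqF // (lt_trans (ltrN10 F)) // ltr0n.
  rewrite QE H // rrE // mulrA -exprD (exprnP z (j + d)) PoszD -Hkj expfzDr //.
  by rewrite -exprnP !mulrA [z ^+ K * f]mulrC subrr.
have /eqP := QE 1; rewrite Q0 horner0 rrE ?oner_eq0 // invr1 !expr1n !mul1r.
rewrite eq_sym subr_eq0 -{1}[r.[1]]mul1r => /eqP/(mulIf r1) f1.
split; first by [].
have /eqP := QE (-1); rewrite Q0 horner0 rrE ?oppr_eq0 ?oner_eq0 // invrN1 -f1 mul1r.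
rewrite eq_sym subr_eq0 mulrA -exprD => /eqP/(mulIf rm1).
rewrite (exprnP (-1) (j + d)) PoszD -Hkj expfzDr ?oppr_eq0 ?oner_eq0 //.
have nz : (-1 : F) ^+ K != 0 by rewrite expf_neq0 // oppr_eq0 oner_eq0.
by rewrite -exprnP -{1}[(-1) ^+ K]mulr1 => /(mulfI nz)/esym.
Qed.

Lemma key (P : {poly F}) (e : F) (m : int) : P != 0 ->
  (forall z, z != 0 -> P.[z] = e * z ^ m * P.[z^-1]) ->
  e = (-1) ^+ mup 1 P /\ (-1) ^ (m - (mup 1 P + mup (-1) P)%N%:Z) = 1 :> F.
Proof.
move=> P0 HP.
have [q1 [Hq1 nr1]] := factor_mup 1 P0.
have q10 : q1 != 0 by apply: contraNneq nr1 => ->; rewrite root0.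
have b_eq : mup (-1) P = mup (-1) q1.
  rewrite [in LHS]Hq1 mupMl //.
  by rewrite /root horner_exp hornerXsubC expf_eq0 subr_eq0 (negbTE neg1_neq1) andbF.
have [r [Hr nrm1]] := factor_mup (-1) q10.
rewrite -b_eq in Hr.
move: Hq1 Hr; set a := mup 1 P; set b := mup (-1) P => Hq1 Hr.
have r1 : r.[1] != 0.
  by apply: contraNneq nr1 => h; rewrite /root Hr hornerM h mul0r.
have Hz : forall z, z != 0 -> z != 1 -> z != -1 ->
    r.[z] = (e * (-1) ^+ a) * z ^ (m - (a + b)%N%:Z) * r.[z^-1].
  move=> z z0 zn1 znm1.
  have Az : z - -1 != 0 by rewrite subr_eq0.
  have Bz : z - 1 != 0 by rewrite subr_eq0.
  have := HP z z0; rewrite Hq1 Hr !hornerM !horner_exp !hornerXsubC.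
  have -> : z^-1 - -1 = (z - -1) * z^-1 by field.
  have -> : z^-1 - 1 = (-1) * (z - 1) * z^-1 by field.
  rewrite !exprMn expfzDr // -exprnN exprnP.
  move: (z ^ m) (r.[z]) (r.[z^-1]) => w x y.
  rewrite -!exprnP !exprVn exprD.
  have za : z ^+ a != 0 by rewrite expf_neq0.
  have zb : z ^+ b != 0 by rewrite expf_neq0.
  have Aa : (z - -1) ^+ b != 0 by rewrite expf_neq0.
  have Bb : (z - 1) ^+ a != 0 by rewrite expf_neq0.
  move: (z ^+ a) (z ^+ b) ((z - -1) ^+ b) ((z - 1) ^+ a) za zb Aa Bb.
  move=> za zb Aa Bb za0 zb0 Aa0 Bb0 H.
  transitivity (x * Aa * Bb / Bb / Aa); first by field; rewrite Aa0 Bb0.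
  by rewrite H; field; rewrite za0 zb0 Aa0 Bb0.
have [f1 k1] := inner r1 nrm1 Hz.
split => //.
by rewrite -[e]mulr1 -{1}(@sqrr_sign F a) expr2 mulrA f1 mul1r.
Qed.
End H.

Theorem lemma3p2 (R : realType) (u : lpoly R[i]) (eps : R[i]) (c : int) :
  lpoly_nonzero u ->
  (eps = 1 \/ eps = -1) ->
  has_symtype u eps c ->
  eps = (-1) ^+ lmult u 1 /\
  oddZ c = oddZ ((lmult u 1 + lmult u (-1))%N)%:Z.
Proof.
move=> [k uk] heps hsym.
set N := lbound u.
set P := lshiftpoly u.
have kN : (`|k| <= N)%N.
  by rewrite leqNgt; apply: contra uk => /lboundP ->.
have P0 : P != 0.
  apply/eqP => P0; move/eqP: uk; apply.
  have := congr1 (fun p : {poly R[i]} => p`_(absz (k + N%:Z))) P0.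
  rewrite coef0 /= /P /lshiftpoly coef_poly.
  have -> : (absz (k + N%:Z)%R < N.*2.+1)%N by lia.
  have -> : (absz (k + N%:Z))%:Z - N%:Z = k by lia.
  by move=> ->.
have levE z : z != 0 -> leval u z = P.[z] * z ^ (- N%:Z).
  move=> z0; rewrite /leval /P /lshiftpoly horner_poly mulr_suml.
  apply: eq_bigr => i _; rewrite -mulrA; congr (_ * _).
  by rewrite expfzDr.
have HP : forall z, z != 0 -> P.[z] = eps * z ^ (c + N%:Z + N%:Z) * P.[z^-1].
  move=> z z0; have := hsym z z0; rewrite levE // levE ?invr_eq0 //.
  rewrite exprz_inv opprK !expfzDr // -invr_expz.
  have t0 : z ^ N%:Z != 0 by rewrite expfz_neq0.
  move: (z ^ N%:Z) (z ^ c) t0 => t w t0 H.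
  transitivity (P.[z] * t^-1 * t); first by field.
  by rewrite H; field.
have [e1 o1] := key P0 HP.
split; first exact: e1.
move: o1; rewrite expN1r -signr_odd.
case ho: (odd _) => /=.
  by rewrite expr1 => /eqP; rewrite (negbTE (neg1_neq1 _)).
move=> _.
have ho' : odd (absz (c + N%:Z + N%:Z - (lmult u 1 + lmult u (-1))%N%:Z)%R) = false := ho.
move: ho'; rewrite /oddZ.
generalize (lmult u 1) (lmult u (-1)) N => a b n; lia.
Qed.
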